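(* For every integer $n\ge 0$, there is exactly one Dumont permutation of the second kind of length $2n$ avoiding the pattern $312$, i.e. $|\mathfrak D^2_{2n}(312)|=1$ (for $n=0$ the set consists of the empty permutation).
   Context: A Dumont permutation of the second kind of length $2n$ is a permutation $\pi\in\mathfrak S_{2n}$ such that for every $i=1,\dots,n$ one has $\pi(2i)<2i$ and $\pi(2i-1)\ge 2i-1$. $\mathfrak D^2_{2n}$ denotes the set of these. A permutation $\sigma$ contains a pattern $\tau\in\mathfrak S_k$ if some subsequence $(\sigma(i_1),\dots,\sigma(i_k))$, $i_1<\dots<i_k$, is order-isomorphic to $\tau$; otherwise $\sigma$ avoids $\tau$. $\mathfrak D^2_{2n}(T)$ denotes the set of permutations in $\mathfrak D^2_{2n}$ avoiding every pattern in $T$. *)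

(* Defs.v *)
From mathcomp Require Import all_boot all_order all_fingroup.
Set Implicit Arguments. Unset Strict Implicit. Unset Printing Implicit Defensive.

(* Positions and values are 0-based: index k : 'I_m stands for the 1-based
   position k+1, and value s k stands for s k + 1.  *)

(* Dumont permutation of the second kind (length m = 2n):
   1-based: pi(2i) < 2i and pi(2i-1) >= 2i-1.
   0-based index k = 1-based position k+1: even 1-based positions are odd k. *)
Definition dumont2 (m : nat) (s : 'S_m) : bool :=
  [forall k : 'I_m, if odd k then (s k < k)%N else (k <= s k)%N].

Definition contains (m k : nat) (s : 'S_m) (tau : 'S_k) : bool :=
  [exists f : {ffun 'I_k -> 'I_m},
     [forall a : 'I_k, forall b : 'I_k,
        ((a < b)%N ==> (f a < f b)%N) &&
        ((s (f a) < s (f b))%N == (tau a < tau b)%N)]].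

Definition avoids (m k : nat) (s : 'S_m) (tau : 'S_k) : bool := ~~ contains s tau.

Definition p312_fun (i : 'I_3) : 'I_3 :=
  match val i with 0 => inord 2 | 1 => inord 0 | _ => inord 1 end.

Lemma p312_inj : injective p312_fun.
Proof. by apply/injectiveP; apply/injectiveP => -[[|[|[|?]]] Hi] -[[|[|[|?]]] Hj] //= /(congr1 val); rewrite /= ?inordK //; move=> E; apply/val_inj. Qed.

Definition p312 : 'S_3 := perm p312_inj.

Definition D2avoid (n k : nat) (tau : 'S_k) : {set 'S_(2 * n)} :=
  [set s : 'S_(2 * n) | dumont2 s && avoids s tau].

(* Main.v *)
Require Import Defs.
From mathcomp Require Import all_boot all_order all_fingroup.
From mathcomp Require Import zify.

Definition swp (k : nat) : nat := if odd k then k.-1 else k.+1.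

Lemma contains312 m (s : 'S_m) (x y z : 'I_m) :
  (x < y)%N -> (y < z)%N -> (s y < s z)%N -> (s z < s x)%N -> contains s p312.
Proof.
move=> xy yz h1 h2.
apply/existsP; exists [ffun a : 'I_3 => if val a == 0%N then x else if val a == 1%N then y else z].
apply/forallP => -[[|[|[|?]]] Ha] //; apply/forallP => -[[|[|[|?]]] Hb] //;
  rewrite !ffunE !permE /p312_fun /= !inordK //=;
  (try (apply/andP; split)); try done; apply/eqP; lia.
Qed.

Ltac par k := have := modn2 k; case: (odd k) => /= ?.

Lemma swp_lt m k : (k < 2 * m)%N -> (swp k < 2 * m)%N.
Proof. rewrite /swp; par k; lia. Qed.

Lemma swpK k : swp (swp k) = k.
Proof. rewrite /swp; par k; [par k.-1 | par k]; lia. Qed.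

Lemma swp_dum k : if odd k then (swp k < k)%N else (k <= swp k)%N.
Proof. rewrite /swp; par k; lia. Qed.

Lemma swp_far x y : (x + 2 <= y)%N -> (swp x < swp y)%N.
Proof. rewrite /swp; par x; par y; lia. Qed.

Definition sw_fun n (k : 'I_(2 * n)) : 'I_(2 * n) := Ordinal (@swp_lt n k (ltn_ord k)).

Lemma sw_inj n : injective (@sw_fun n).
Proof. move=> a b /(congr1 val) /= /(congr1 swp); rewrite !swpK => h; exact: val_inj. Qed.

Definition sw n : 'S_(2 * n) := perm (@sw_inj n).

Lemma sw_ok n : dumont2 (sw n) && avoids (sw n) p312.
Proof.
apply/andP; split.
  apply/forallP => k; rewrite permE /=; exact: swp_dum.
apply/negP => /existsP [f /forallP H].
have H01 := H (inord 0); have H02 := H (inord 0).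
move: H01 => /forallP /(_ (inord 1)) /andP [/implyP h01 /eqP e01].
move: H02 => /forallP /(_ (inord 2)) /andP [/implyP h02 /eqP e02].
move: (H (inord 1)) => /forallP /(_ (inord 2)) /andP [/implyP h12 /eqP e12].
rewrite !permE /p312_fun /= !inordK // in h01 e01 h02 e02 h12 e12.
have {}h01 := h01 isT; have {}h12 := h12 isT; have {}h02 := h02 isT.
move: h01 h12 h02 e01 e02 e12.
set a := f (inord 0); set b := f (inord 1); set c := f (inord 2).
move=> h01 h12 h02 e01 e02 e12.
have := @swp_far a c ltac:(lia).
move: e02 => /= /negbT; rewrite -leqNgt; lia.
Qed.

Lemma swp_lt2 i v : (v < 2 * i)%N -> (swp v < 2 * i)%N.
Proof. exact: swp_lt. Qed.

Lemma uniq_sw n (s : 'S_(2 * n)) : dumont2 s -> avoids s p312 ->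
  forall k : 'I_(2 * n), nat_of_ord (s k) = swp k.
Proof.
move=> /forallP D /negP A.
suff H : forall i (k : 'I_(2 * n)), (k < 2 * i)%N -> nat_of_ord (s k) = swp k.
  by move=> k; apply: (H n k); exact: ltn_ord.
elim=> [|i IH] k hk; first lia.
case: (leqP n i) => hin.
  by apply: IH; have := ltn_ord k; lia.
have small : forall (j : 'I_(2 * n)), (nat_of_ord (s j) < 2 * i)%N -> (nat_of_ord j < 2 * i)%N.
  move=> j hj.
  have hv : (swp (s j) < 2 * n)%N by apply: swp_lt; have := ltn_ord (s j); lia.
  have e : s (Ordinal hv) = s j.
    apply: val_inj => /=; rewrite IH /= ?swpK //; exact: swp_lt2.
  by rewrite -(perm_inj e) /=; exact: swp_lt2.
have hp0 : (2 * i < 2 * n)%N by lia.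
have hp1 : (2 * i + 1 < 2 * n)%N by lia.
pose p0 := Ordinal hp0; pose p1 := Ordinal hp1.
have D0 := D p0; have D1 := D p1.
rewrite /= (_ : odd (2 * i) = false) in D0; last by par (2 * i); lia.
rewrite /= (_ : odd (2 * i + 1) = true) in D1; last by par (2 * i + 1); lia.
have s1 : nat_of_ord (s p1) = (2 * i)%N.
  case: (ltnP (s p1) (2 * i)) => h; last by lia.
  by have := small p1 h; rewrite /=; lia.
have s0 : nat_of_ord (s p0) = (2 * i + 1)%N.
  have ne : nat_of_ord (s p0) != (2 * i)%N.
    apply/eqP => e; have : s p0 = s p1 by apply: val_inj; rewrite /= e s1.
    by move/perm_inj/(congr1 val) => /=; lia.
  case: (ltnP (2 * i + 1) (s p0)) => h; last by lia.
  exfalso; apply: A.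
  pose v := Ordinal hp1.
  pose j := (s^-1)%g v.
  have sj : s j = v by rewrite /j permKV.
  have hj : (2 * i + 1 < j)%N.
    case: (ltnP j (2 * i)) => h2.
      have := IH j h2; rewrite sj /= => e.
      have := @swp_lt2 i j h2; lia.
    have : j != p0.
      by apply/eqP => ej; move: sj; rewrite ej => /(congr1 val) /=; lia.
    have : j != p1.
      by apply/eqP => ej; move: sj; rewrite ej => /(congr1 val) /=; lia.
    move=> /eqP n1 /eqP n0.
    have n1' : nat_of_ord j != (2 * i + 1)%N by apply/eqP => e; apply: n1; exact: val_inj.
    have n0' : nat_of_ord j != (2 * i)%N by apply/eqP => e; apply: n0; exact: val_inj.
    lia.
  apply: (@contains312 _ s p0 p1 j) => /=; rewrite ?sj ?s1 ?s0 /=; lia.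
have : (k < 2 * i)%N \/ nat_of_ord k = (2 * i)%N \/ nat_of_ord k = (2 * i + 1)%N by lia.
case=> [h|[h|h]]; first exact: IH.
  have -> : k = p0 by apply: val_inj.
  by rewrite s0 /swp /=; par (2 * i); lia.
have -> : k = p1 by apply: val_inj.
by rewrite s1 /swp /=; par (2 * i + 1); lia.
Qed.

Theorem theorem2p4 (n : nat) : #|D2avoid n p312| = 1%N.
Proof.
have -> : D2avoid n p312 = [set sw n]; last exact: cards1.
apply/setP => s; rewrite in_set1 inE.
apply/idP/eqP => [/andP [d a] | ->]; last exact: sw_ok.
apply/permP => k; apply: val_inj; rewrite permE /=; exact: uniq_sw.
Qed.
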